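(* Let $n\ge 1$ and let $h$ be a hole of the triangular board $T_n$. Suppose a sequence of jumps on $T_n$ starts from the position in which every hole holds a peg except $h$, and ends in the position in which exactly one peg remains, located at $h$ (a solution to the complement problem at $h$). Then none of the board positions occurring in this sequence has $120^\circ$ rotational symmetry, i.e., no such position $P$ satisfies $P(r(g))=P(g)$ for every hole $g$, where $r(x,y)=(y-x,\,n-1-x)$.
   Context: The triangular board $T_n$ is the set of holes with integer skew coordinates $(x,y)$ satisfying $0\le x\le y\le n-1$. A board position $P$ assigns to each hole either a peg or no peg. A jump takes a peg at hole $p$, jumps it over a peg at an adjacent hole $p+d$ into an empty hole $p+2d$, where $d$ is one of the six directions $(\pm1,0)$, $(0,\pm1)$, $(1,1)$, $(-1,-1)$ and all three holes lie in $T_n$; the jumped-over peg is removed. The map $r(x,y)=(y-x,n-1-x)$ is the counterclockwise rotation of $T_n$ by $120^\circ$ in skew coordinates; a position has $120^\circ$ rotational symmetry if it is invariant under $r$. *)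

(* Defs.v *)
(* holes are integer pairs (x,y) in skew coordinates. *)
From Stdlib Require Import ZArith.
Open Scope Z_scope.

Definition hole := (Z * Z)%type.

Definition in_board (n : nat) (g : hole) : Prop :=
  0 <= fst g /\ fst g <= snd g /\ snd g <= Z.of_nat n - 1.

(* a board position: peg (true) or no peg (false) at each hole;
   values outside T_n are irrelevant and are never inspected *)
Definition position := hole -> bool.

Definition hadd (g d : hole) : hole := (fst g + fst d, snd g + snd d).

Definition is_dir (d : hole) : Prop :=
  d = (1,0) \/ d = (-1,0) \/ d = (0,1) \/ d = (0,-1) \/ d = (1,1) \/ d = (-1,-1).

Definition jump (n : nat) (P Q : position) : Prop :=
  exists (p d : hole),
    is_dir d /\
    in_board n p /\ in_board n (hadd p d) /\ in_board n (hadd (hadd p d) d) /\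
    P p = true /\ P (hadd p d) = true /\ P (hadd (hadd p d) d) = false /\
    Q p = false /\ Q (hadd p d) = false /\ Q (hadd (hadd p d) d) = true /\
    (forall g, in_board n g -> g <> p -> g <> hadd p d ->
       g <> hadd (hadd p d) d -> Q g = P g).

Definition start_pos (n : nat) (h : hole) (P : position) : Prop :=
  forall g, in_board n g -> (P g = true <-> g <> h).

Definition final_pos (n : nat) (h : hole) (P : position) : Prop :=
  forall g, in_board n g -> (P g = true <-> g = h).

Definition rot (n : nat) (g : hole) : hole :=
  (snd g - fst g, Z.of_nat n - 1 - fst g).

Definition rot_symmetric (n : nat) (P : position) : Prop :=
  forall g, in_board n g -> P (rot n g) = P g.

(* Main.v *)
Require Import Defs.
From Stdlib Require Import ZArith.
From Stdlib Require Import List Lia Permutation Btauto.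
Open Scope Z_scope.

Ltac zl := Z.div_mod_to_equations; lia.


Fixpoint xs {A} (l : list A) (f : A -> bool) : bool :=
  match l with nil => false | x :: l => xorb (f x) (xs l f) end.

Lemma xs_app {A} (l1 l2 : list A) f : xs (l1 ++ l2) f = xorb (xs l1 f) (xs l2 f).
Proof. induction l1; simpl; [destruct (xs l2 f); reflexivity|rewrite IHl1; btauto]. Qed.

Lemma xs_ext {A} (l : list A) f g : (forall x, In x l -> f x = g x) -> xs l f = xs l g.
Proof. induction l; simpl; intros H; auto. rewrite H, IHl; auto. Qed.

Lemma xs_xor {A} (l : list A) f g : xs l (fun x => xorb (f x) (g x)) = xorb (xs l f) (xs l g).
Proof. induction l; simpl; auto. rewrite IHl. btauto. Qed.

Lemma xs_false {A} (l : list A) f : (forall x, In x l -> f x = false) -> xs l f = false.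
Proof. induction l; simpl; intros H; auto. rewrite H, IHl; auto. Qed.

Lemma xs_perm {A} (l l' : list A) f : Permutation l l' -> xs l f = xs l' f.
Proof. induction 1; simpl; auto; try congruence. btauto. Qed.

Lemma xs_map {A B} (l : list A) (g : A -> B) f : xs (map g l) f = xs l (fun x => f (g x)).
Proof. induction l; simpl; congruence. Qed.

Definition heq_dec : forall a b : hole, {a = b} + {a <> b}.
Proof. decide equality; apply Z.eq_dec. Defined.

Definition ind (p : hole) (g : hole) : bool := if heq_dec g p then true else false.

Lemma xs_point (l : list hole) f h : NoDup l -> In h l ->
  (forall x, In x l -> x <> h -> f x = false) -> xs l f = f h.
Proof.
  induction l as [|a l IH]; simpl; intros Hn Hi H; [contradiction|].
  inversion Hn; subst.
  destruct (heq_dec a h) as [->|Hne].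
  - rewrite xs_false; [destruct (f h); reflexivity|].
    intros x Hx; apply H; auto. intro; subst; contradiction.
  - rewrite H by auto. destruct Hi as [->|Hi]; [congruence|]. simpl. apply IH; auto.
Qed.

Definition col (g : hole) : Z := (fst g + snd g) mod 3.

Lemma col_triple u dl c : (dl = 1 \/ dl = -1 \/ dl = 2 \/ dl = -2) -> 0 <= c < 3 ->
  xorb (u mod 3 =? c) (xorb ((u + dl) mod 3 =? c) ((u + 2*dl) mod 3 =? c)) = true.
Proof.
  intros Hd Hc.
  rewrite <- (Zplus_mod_idemp_l u dl), <- (Zplus_mod_idemp_l u (2*dl)).
  assert (Hu : u mod 3 = 0 \/ u mod 3 = 1 \/ u mod 3 = 2) by zl.
  assert (Hc' : c = 0 \/ c = 1 \/ c = 2) by lia.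
  destruct Hu as [Hu|[Hu|Hu]]; rewrite Hu;
  destruct Hd as [Hd|[Hd|[Hd|Hd]]]; rewrite Hd; destruct Hc' as [Hc'|[Hc'|Hc']]; rewrite Hc'; reflexivity.
Qed.

Definition row (y : nat) : list hole := map (fun x => (Z.of_nat x, Z.of_nat y)) (seq 0 (S y)).
Fixpoint bl (n : nat) : list hole := match n with O => nil | S n => bl n ++ row n end.

Lemma in_row y g : In g (row y) <-> (0 <= fst g <= Z.of_nat y /\ snd g = Z.of_nat y).
Proof.
  unfold row; rewrite in_map_iff; split.
  - intros [x [<- Hx]]. apply in_seq in Hx. simpl. lia.
  - destruct g as [a b]; simpl; intros [H1 H2]. exists (Z.to_nat a). rewrite in_seq.
    split; [f_equal; lia|]. simpl in *; lia.
Qed.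

Lemma in_bl n g : In g (bl n) <-> in_board n g.
Proof.
  unfold in_board. induction n.
  - simpl. split; [contradiction| lia].
  - cbn [bl]. rewrite in_app_iff, IHn, in_row, Nat2Z.inj_succ. lia.
Qed.

Lemma nodup_bl n : NoDup (bl n).
Proof.
  induction n; simpl; [constructor|].
  apply NoDup_app; auto.
  - apply FinFun.Injective_map_NoDup; [|apply seq_NoDup].
    intros a b H. injection H. lia.
  - intros a Ha Hb. apply in_bl in Ha. apply in_row in Hb. unfold in_board in Ha. lia.
Qed.

Definition K (n : nat) (c : Z) (P : position) : bool :=
  xs (bl n) (fun g => andb (col g =? c) (P g)).

Lemma K_jump n P Q c : 0 <= c < 3 -> jump n P Q -> K n c Q = negb (K n c P).
Proof.
  intros Hc [p [d [Hd [Hp1 [Hp2 [Hp3 [HP1 [HP2 [HP3 [HQ1 [HQ2 [HQ3 Hrest]]]]]]]]]]]].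
  set (p2 := hadd p d) in *. set (p3 := hadd p2 d) in *.
  destruct p as [x y], d as [a b].
  assert (Hab : (a = 1 /\ b = 0) \/ (a = -1 /\ b = 0) \/ (a = 0 /\ b = 1) \/
                (a = 0 /\ b = -1) \/ (a = 1 /\ b = 1) \/ (a = -1 /\ b = -1)).
  { destruct Hd as [E|[E|[E|[E|[E|E]]]]]; injection E; lia. }
  assert (D12 : (x, y) <> p2) by (unfold p2, hadd; simpl; intro E; injection E; lia).
  assert (D13 : (x, y) <> p3) by (unfold p3, p2, hadd; simpl; intro E; injection E; lia).
  assert (D23 : p2 <> p3) by (unfold p3, p2, hadd; simpl; intro E; injection E; lia).
  unfold K.
  transitivity (xs (bl n) (fun g => xorb (andb (col g =? c) (P g))
     (xorb (andb (col g =? c) (ind (x,y) g)) (xorb (andb (col g =? c) (ind p2 g))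
        (andb (col g =? c) (ind p3 g)))))).
  { apply xs_ext. intros g Hg. apply in_bl in Hg. unfold ind.
    destruct (heq_dec g (x,y)), (heq_dec g p2), (heq_dec g p3); subst; try congruence.
    - rewrite HQ1, HP1. destruct (_ =? c); reflexivity.
    - rewrite HQ2, HP2. destruct (_ =? c); reflexivity.
    - rewrite HQ3, HP3. destruct (_ =? c); reflexivity.
    - rewrite Hrest by auto. destruct (_ =? c), (P g); reflexivity. }
  assert (Hpt : forall p, In p (bl n) -> xs (bl n) (fun g => andb (col g =? c) (ind p g)) = (col p =? c)).
  { intros q Hq. rewrite (xs_point _ _ q); auto.
    - unfold ind. destruct (heq_dec q q); [|congruence]. apply Bool.andb_true_r.
    - apply nodup_bl.
    - intros z _ Hz. unfold ind. destruct (heq_dec z q); [congruence|apply Bool.andb_false_r]. }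
  rewrite !xs_xor, !Hpt by (apply in_bl; auto).
  assert (E2 : col p2 = (x + y + (a + b)) mod 3) by (unfold col, p2, hadd; simpl; apply (f_equal (fun t => t mod 3)); ring).
  assert (E3 : col p3 = (x + y + 2 * (a + b)) mod 3) by (unfold col, p3, p2, hadd; cbn [fst snd]; apply (f_equal (fun t => t mod 3)); ring).
  rewrite E2, E3. unfold col; simpl.
  rewrite col_triple; [destruct (xs _ _); reflexivity| lia | exact Hc].
Qed.

Lemma rot_inj n : FinFun.Injective (rot n).
Proof. intros [a b] [c d] H; unfold rot in H; simpl in H; injection H; intros; f_equal; lia. Qed.
Lemma rot3 n g : rot n (rot n (rot n g)) = g.
Proof. destruct g; unfold rot; simpl; f_equal; ring. Qed.
Lemma rot_board n g : in_board n g -> in_board n (rot n g).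
Proof. unfold in_board, rot; simpl; lia. Qed.
Lemma perm_rot n : Permutation (bl n) (map (rot n) (bl n)).
Proof.
  apply NoDup_Permutation; [apply nodup_bl| apply FinFun.Injective_map_NoDup; [apply rot_inj|apply nodup_bl]|].
  intros x; rewrite in_map_iff, in_bl; split.
  - intros H; exists (rot n (rot n x)); rewrite rot3; split; auto; apply in_bl; do 2 apply rot_board; auto.
  - intros [y [<- Hy]]; apply rot_board, in_bl; auto.
Qed.

Lemma K_rot n P c c' : rot_symmetric n P -> 0 <= c < 3 -> 0 <= c' < 3 ->
  (c' + Z.of_nat n - 1) mod 3 = c -> K n c P = K n c' P.
Proof.
  intros H Hc Hc' Hcc. unfold K. rewrite (xs_perm _ _ _ (perm_rot n)), xs_map.
  apply xs_ext. intros g Hg; apply in_bl in Hg. rewrite (H g Hg). f_equal.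
  unfold col, rot; simpl.
  destruct (Z.eqb_spec ((snd g - fst g + (Z.of_nat n - 1 - fst g)) mod 3) c),
    (Z.eqb_spec ((fst g + snd g) mod 3) c'); auto; exfalso; zl.
Qed.

Definition Kf n c := xs (bl n) (fun g => col g =? c).

Lemma block q : forall r a b c, 0 <= c < 3 ->
  xs (seq a (3*q + r)) (fun x => (Z.of_nat x + b) mod 3 =? c) =
  xorb (Nat.odd q) (xs (seq (a + 3*q) r) (fun x => (Z.of_nat x + b) mod 3 =? c)).
Proof.
  induction q; intros r a b c Hc.
  - simpl. rewrite Nat.add_0_r. destruct (xs _ _); reflexivity.
  - replace (3 * S q + r)%nat with (3 + (3*q + r))%nat by lia.
    rewrite seq_app, xs_app, IHq by auto.
    replace (a + 3 + 3*q)%nat with (a + 3 * S q)%nat by lia.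
    cbn [seq xs].
    rewrite !Nat2Z.inj_succ.
    replace (Z.succ (Z.succ (Z.of_nat a)) + b) with ((Z.of_nat a + b) + 2 * 1) by ring.
    replace (Z.succ (Z.of_nat a) + b) with ((Z.of_nat a + b) + 1) by ring.
    rewrite Bool.xorb_false_r, col_triple by lia.
    rewrite Nat.odd_succ, <- Nat.negb_odd. destruct (Nat.odd q), (xs _ _); reflexivity.
Qed.

Lemma row_xs y c : xs (row y) (fun g => col g =? c) =
  xs (seq 0 (S y)) (fun x => (Z.of_nat x + Z.of_nat y) mod 3 =? c).
Proof. unfold row; rewrite xs_map; reflexivity. Qed.

Lemma R1 m c : 0 <= c < 3 -> xs (seq 0 (S (3*m+1))) (fun x => (Z.of_nat x + Z.of_nat (3*m+1)) mod 3 =? c)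
  = xorb (Nat.odd m) (xorb (1 =? c) (2 =? c)).
Proof.
  intros Hc. replace (S (3*m+1)) with (3*m+2)%nat by lia. rewrite block by auto.
  cbn [seq xs].
  replace ((Z.of_nat (0 + 3 * m) + Z.of_nat (3 * m + 1)) mod 3) with 1 by zl.
  replace ((Z.of_nat (S (0 + 3 * m)) + Z.of_nat (3 * m + 1)) mod 3) with 2 by zl.
  rewrite Bool.xorb_false_r. reflexivity.
Qed.

Lemma R2 m c : 0 <= c < 3 -> xs (seq 0 (S (S (3*m+1)))) (fun x => (Z.of_nat x + Z.of_nat (S (3*m+1))) mod 3 =? c)
  = Nat.odd (S m).
Proof.
  intros Hc. replace (S (S (3*m+1))) with (3*(S m)+0)%nat by lia. rewrite block by auto.
  cbn [seq xs]. apply Bool.xorb_false_r.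
Qed.

Lemma R3 m c : 0 <= c < 3 -> xs (seq 0 (S (S (S (3*m+1))))) (fun x => (Z.of_nat x + Z.of_nat (S (S (3*m+1)))) mod 3 =? c)
  = xorb (Nat.odd (S m)) (0 =? c).
Proof.
  intros Hc. replace (S (S (S (3*m+1)))) with (3*(S m)+1)%nat by lia. rewrite block by auto.
  cbn [seq xs].
  replace ((Z.of_nat (0 + 3 * S m) + Z.of_nat (S (S (3 * m + 1)))) mod 3) with 0 by zl.
  rewrite Bool.xorb_false_r. reflexivity.
Qed.

Lemma full_parity m : xorb (Kf (3*m+1) 0) (Kf (3*m+1) 1) = true.
Proof.
  induction m; [reflexivity|].
  replace (3 * S m + 1)%nat with (S (S (S (3*m+1)))) by lia.
  unfold Kf in *. cbn [bl]. rewrite !xs_app, !row_xs.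
  rewrite !R1, !R2, !R3 by lia. revert IHm.
  destruct (xs (bl (3 * m + 1)) _), (xs (bl (3 * m + 1)) _), (Nat.odd m), (Nat.odd (S m)); simpl; auto.
Qed.

Lemma K_final n h P c : final_pos n h P -> in_board n h -> K n c P = (col h =? c).
Proof.
  intros H Hh. unfold K. rewrite (xs_point _ _ h).
  - rewrite (proj2 (H h Hh) eq_refl). apply Bool.andb_true_r.
  - apply nodup_bl.
  - apply in_bl; auto.
  - intros x Hx Hne. apply in_bl in Hx. destruct (P x) eqn:E; [|apply Bool.andb_false_r].
    exfalso. apply Hne. apply (H x Hx); auto.
Qed.

Lemma K_start n h P c : start_pos n h P -> in_board n h -> K n c P = xorb (Kf n c) (col h =? c).
Proof.
  intros H Hh. unfold K, Kf.
  transitivity (xs (bl n) (fun g => xorb (col g =? c) (andb (col g =? c) (ind h g)))).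
  { apply xs_ext. intros g Hg. apply in_bl in Hg. unfold ind.
    destruct (heq_dec g h).
    - subst. destruct (P h) eqn:E.
      + exfalso. apply (H h Hg) in E. auto.
      + destruct (col h =? c); reflexivity.
    - rewrite (proj2 (H g Hg) n0). destruct (col g =? c); reflexivity. }
  rewrite xs_xor. f_equal. rewrite (xs_point _ _ h).
  - unfold ind. destruct (heq_dec h h); [|congruence]. apply Bool.andb_true_r.
  - apply nodup_bl.
  - apply in_bl; auto.
  - intros z _ Hz. unfold ind. destruct (heq_dec z h); [congruence|apply Bool.andb_false_r].
Qed.

Theorem corollary2p1 (n : nat) (h : hole) (s : nat -> position) (k : nat) :
  (1 <= n)%nat ->
  in_board n h ->
  start_pos n h (s 0%nat) ->
  final_pos n h (s k) ->
  (forall i, (i < k)%nat -> jump n (s i) (s (S i))) ->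
  forall i, (i <= k)%nat -> ~ rot_symmetric n (s i).
Proof.
  intros Hn Hh Hs Hf Hj i Hi Hsym.
  assert (Hinv : forall j, (j <= k)%nat ->
    xorb (K n 0 (s j)) (K n 1 (s j)) = xorb (K n 0 (s 0%nat)) (K n 1 (s 0%nat)) /\
    xorb (K n 1 (s j)) (K n 2 (s j)) = xorb (K n 1 (s 0%nat)) (K n 2 (s 0%nat))).
  { induction j; intros Hjk; [split; reflexivity|].
    destruct IHj as [I1 I2]; [lia|].
    assert (J : jump n (s j) (s (S j))) by (apply Hj; lia).
    rewrite !(K_jump n (s j) (s (S j))) by (lia || exact J).
    rewrite <- I1, <- I2.
    destruct (K n 0 (s j)), (K n 1 (s j)), (K n 2 (s j)); split; reflexivity. }
  assert (Hcol : 0 <= col h < 3) by (unfold col; zl).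
  assert (Fk0 := K_final n h (s k) 0 Hf Hh).
  assert (Fk1 := K_final n h (s k) 1 Hf Hh).
  assert (Fk2 := K_final n h (s k) 2 Hf Hh).
  destruct (Hinv k (Nat.le_refl k)) as [Ik1 Ik2].
  assert (Hdm := Nat.div_mod_eq n 3).
  assert (Hmb := Nat.mod_upper_bound n 3 ltac:(lia)).
  set (q := (n / 3)%nat) in *. set (r := (n mod 3)%nat) in *.
  destruct (Nat.eq_dec r 1) as [Er|Er].
  - assert (FP : xorb (Kf n 0) (Kf n 1) = true).
    { replace n with (3 * q + 1)%nat by lia. apply full_parity. }
    rewrite (K_start n h _ 0 Hs Hh), (K_start n h _ 1 Hs Hh), Fk0, Fk1 in Ik1.
    revert FP Ik1. destruct (Kf n 0), (Kf n 1), (col h =? 0), (col h =? 1); simpl; congruence.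
  - assert (E01 : K n 0 (s i) = K n 1 (s i)).
    { destruct (Nat.eq_dec r 0).
      - apply (K_rot n (s i) 0 1); auto; try lia. zl.
      - symmetry. apply (K_rot n (s i) 1 0); auto; try lia. zl. }
    assert (E12 : K n 1 (s i) = K n 2 (s i)).
    { destruct (Nat.eq_dec r 0).
      - apply (K_rot n (s i) 1 2); auto; try lia. zl.
      - symmetry. apply (K_rot n (s i) 2 1); auto; try lia. zl. }
    destruct (Hinv i Hi) as [Ii1 Ii2].
    rewrite E01 in Ii1. rewrite E12 in Ii2.
    rewrite Bool.xorb_nilpotent in Ii1, Ii2.
    rewrite Fk0, Fk1 in Ik1. rewrite Fk1, Fk2 in Ik2.
    rewrite <- Ik1 in Ii1. rewrite <- Ik2 in Ii2.
    assert (Hc : col h = 0 \/ col h = 1 \/ col h = 2) by lia.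
    destruct Hc as [Hc|[Hc|Hc]]; rewrite Hc in *; simpl in *; congruence.
Qed.
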